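(* Let $V$ be a real vector space of dimension $m$, $\Gamma$ a finitely generated free abelian dense subgroup of $V$ acting by translations, and $\mathcal C$ a countable $\Gamma$-invariant collection of affine hyperplanes with finitely many $\Gamma$-orbits and normals spanning $V$. Suppose $\mathcal P$ consists of finitely many $\Gamma$-orbits. Then for every choice of $W_1,\dots,W_m\in\mathcal C$ intersecting in a single point and every pair of subsets $A_1,A_2\subset\{1,\dots,m\}$: (i) if $A_1\cap A_2=\emptyset$ then $\mathrm{rk}\,\Gamma^{A_1}+\mathrm{rk}\,\Gamma^{A_2}-\mathrm{rk}\,\Gamma^{A_1\cup A_2}=\mathrm{rk}\,\Gamma$; (ii) if $A_1\cup A_2=\{1,\dots,m\}$ then $\mathrm{rk}\,\Gamma^{A_1}+\mathrm{rk}\,\Gamma^{A_2}=\mathrm{rk}\,\Gamma^{A_1\cap A_2}$.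
   Context: $\mathcal P$ is the set of points of $V$ that are $0$-dimensional intersections of $m$ elements of $\mathcal C$. For $A\subset\{1,\dots,m\}$, $W_A=\bigcap_{i\in A}W_i$ (with $W_\emptyset=V$) and $\Gamma^A\subset\Gamma$ is the stabilizer of $W_A$ under translation. *)

(* Defs.v *)
From HB Require Import structures.
From mathcomp Require Import all_boot all_order all_algebra.
From mathcomp Require Import reals.
From Stdlib Require Import ClassicalEpsilon.
Set Implicit Arguments. Unset Strict Implicit. Unset Printing Implicit Defensive.
Import Order.TTheory GRing.Theory Num.Theory.
Local Open Scope ring_scope.

Section Defs.
Variables (R : realType) (m : nat).
Notation V := 'rV[R]_m.

Definition dotv (x a : V) : R := \sum_(j < m) x 0 j * a 0 j.

Definition has_zrank (S : V -> Prop) (n : nat) : Prop :=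
  exists g : 'I_n -> V,
    (forall k : 'I_n -> int, \sum_(i < n) g i *~ k i = 0 -> forall i, k i = 0)
    /\ (forall x, S x <-> exists k : 'I_n -> int, x = \sum_(i < n) g i *~ k i).

(* rank of a free abelian group of finite rank (0 by convention otherwise) *)
Definition zrank (S : V -> Prop) : nat := epsilon (inhabits 0%N) (has_zrank S).

(* density of S in V (sup norm, all norms on R^m being equivalent) *)
Definition dense_in_V (S : V -> Prop) : Prop :=
  forall (v : V) (eps : R), 0 < eps ->
    exists g, S g /\ forall j : 'I_m, `|g 0 j - v 0 j| < eps.

Definition translate (H : V -> Prop) (g : V) : V -> Prop := fun x => H (x - g).

Definition same_set (H K : V -> Prop) : Prop := forall x, H x <-> K x.

Definition hyperplane (p : V * R) : V -> Prop := fun x => dotv x p.1 = p.2.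

Variable (I : Type) (hyp : I -> V * R).
(* C = { hyperplane (hyp i) | i : I } *)

Definition W_A (w : 'I_m -> I) (A : {set 'I_m}) : V -> Prop :=
  fun x => forall k, k \in A -> hyperplane (hyp (w k)) x.

Definition stabA (Gamma : V -> Prop) (w : 'I_m -> I) (A : {set 'I_m}) : V -> Prop :=
  fun g => Gamma g /\ same_set (translate (W_A w A) g) (W_A w A).

Definition meet_in_point (w : 'I_m -> I) (p : V) : Prop :=
  forall x, W_A w setT x <-> x = p.

Definition Pset (p : V) : Prop := exists w : 'I_m -> I, meet_in_point w p.

End Defs.

(* Main.v *)
Require Import Defs.
From HB Require Import structures.
From mathcomp Require Import all_boot all_order all_algebra.
From mathcomp Require Import reals.
From mathcomp Require Import ring.
From Stdlib Require Import ClassicalEpsilon Classical.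
Set Implicit Arguments. Unset Strict Implicit. Unset Printing Implicit Defensive.
Import Order.TTheory GRing.Theory Num.Theory.
Local Open Scope ring_scope.

Section Lattice.
Variable M : zmodType.

Definition indep n (g : 'I_n -> M) :=
  forall k : 'I_n -> int, \sum_(i < n) g i *~ k i = 0 -> forall i, k i = 0.
Definition zspan n (g : 'I_n -> M) x :=
  exists k : 'I_n -> int, x = \sum_(i < n) g i *~ k i.
Definition zbasis (S : M -> Prop) n (g : 'I_n -> M) :=
  indep g /\ forall x, S x <-> zspan g x.
Definition subgrp (S : M -> Prop) := S 0 /\ forall x y, S x -> S y -> S (x - y).

Lemma subgrpN S x : subgrp S -> S x -> S (- x).
Proof. by move=> [S0 SB] Sx; rewrite -sub0r; apply: SB. Qed.

Lemma subgrpD S x y : subgrp S -> S x -> S y -> S (x + y).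
Proof. by move=> SS Sx Sy; rewrite -(opprK y); apply: SS.2 => //; apply: subgrpN. Qed.

Lemma subgrpMn S x N : subgrp S -> S x -> S (x *+ N).
Proof.
move=> SS Sx; elim: N => [|N IH]; first by rewrite mulr0n; exact: SS.1.
by rewrite mulrS; apply: subgrpD.
Qed.

Lemma subgrpMz S x z : subgrp S -> S x -> S (x *~ z).
Proof.
move=> SS Sx; case: z => N; first by rewrite -[Posz N]natz mulrz_nat; exact: subgrpMn.
by rewrite NegzE mulrNz -[Posz _]natz mulrz_nat; apply: subgrpN => //; exact: subgrpMn.
Qed.

Lemma subgrp_sum S r (h : 'I_r -> M) (l : 'I_r -> int) :
  subgrp S -> (forall j, S (h j)) -> S (\sum_(j < r) h j *~ l j).
Proof.
move=> SS Sh; apply: (big_ind S); first exact: SS.1.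
  by move=> ??; apply: subgrpD.
by move=> j _; apply: subgrpMz.
Qed.

Lemma sumB n (g : 'I_n -> M) k1 k2 :
  \sum_(i < n) g i *~ k1 i - \sum_(i < n) g i *~ k2 i = \sum_(i < n) g i *~ (k1 i - k2 i).
Proof. by rewrite -sumrB; apply: eq_bigr => i _; rewrite mulrzBr. Qed.

Lemma sumMz n (g : 'I_n -> M) k z :
  (\sum_(i < n) g i *~ k i) *~ z = \sum_(i < n) g i *~ (k i * z).
Proof. by rewrite mulrz_suml; apply: eq_bigr => i _; rewrite mulrzA. Qed.

Lemma zspan_subgrp n (g : 'I_n -> M) : subgrp (zspan g).
Proof.
split; first by exists (fun _ => 0); rewrite big1 // => i _; rewrite mulr0z.
by move=> x y [k1 ->] [k2 ->]; exists (fun i => k1 i - k2 i); rewrite sumB.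
Qed.

Lemma zbasis_in S n (g : 'I_n -> M) j : zbasis S g -> S (g j).
Proof.
move=> [_ H]; apply/H; exists (fun i => (i == j)%:Z).
rewrite (bigD1 j) //= eqxx big1 ?addr0 // => i /negPf ->; by rewrite mulr0z.
Qed.

Section Coef.
Variables (n : nat) (g : 'I_n -> M).
Hypothesis gind : indep g.

Definition coef x : 'I_n -> int :=
  epsilon (inhabits (fun _ => 0)) (fun k => x = \sum_(i < n) g i *~ k i).

Lemma coefK x : zspan g x -> x = \sum_(i < n) g i *~ coef x i.
Proof. by move=> H; apply: (epsilon_spec (inhabits (fun _ => 0)) _ H). Qed.

Lemma comb_inj k1 k2 : \sum_(i < n) g i *~ k1 i = \sum_(i < n) g i *~ k2 i -> forall i, k1 i = k2 i.
Proof.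
move=> e i; apply/eqP; rewrite -subr_eq0; apply/eqP; move: i; apply: gind.
by rewrite -sumB e subrr.
Qed.

Lemma coef_sum k i : coef (\sum_(i < n) g i *~ k i) i = k i.
Proof.
apply: comb_inj; rewrite -coefK //; by exists k.
Qed.

Lemma comb_exchange r (h : 'I_r -> M) (l : 'I_r -> int) :
  (forall j, zspan g (h j)) ->
  \sum_(j < r) h j *~ l j = \sum_(i < n) g i *~ (\sum_(j < r) coef (h j) i * l j).
Proof.
move=> hs.
transitivity (\sum_(j < r) \sum_(i < n) g i *~ (coef (h j) i * l j)).
  by apply: eq_bigr => j _; rewrite {1}(coefK (hs j)) sumMz.
rewrite exchange_big /=; apply: eq_bigr => i _; by rewrite mulrz_sumr.
Qed.

Lemma coef_comb r (h : 'I_r -> M) (l : 'I_r -> int) i :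
  (forall j, zspan g (h j)) ->
  coef (\sum_(j < r) h j *~ l j) i = \sum_(j < r) coef (h j) i * l j.
Proof. by move=> hs; rewrite comb_exchange // coef_sum. Qed.

Lemma coefB x y i : zspan g x -> zspan g y -> coef (x - y) i = coef x i - coef y i.
Proof. by move=> hx hy; rewrite {1}(coefK hx) {1}(coefK hy) sumB coef_sum. Qed.

Lemma coefD x y i : zspan g x -> zspan g y -> coef (x + y) i = coef x i + coef y i.
Proof.
move=> hx hy; rewrite {1}(coefK hx) {1}(coefK hy) -big_split /=.
have -> : \sum_(i0 < n) (g i0 *~ coef x i0 + g i0 *~ coef y i0) =
  \sum_(i0 < n) g i0 *~ (coef x i0 + coef y i0).
  by apply: eq_bigr => j _; rewrite mulrzDr.
by rewrite coef_sum.
Qed.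

Lemma coefMz x z i : zspan g x -> coef (x *~ z) i = coef x i * z.
Proof. by move=> hx; rewrite {1}(coefK hx) sumMz coef_sum. Qed.

Lemma coefMn x N i : zspan g x -> coef (x *+ N) i = coef x i *+ N.
Proof. by move=> hx; rewrite -mulrz_nat coefMz // mulr_natr. Qed.

End Coef.

Lemma min_ex (P : nat -> Prop) : (exists N, P N) -> exists N, P N /\ forall K, P K -> (N <= K)%N.
Proof.
move=> [N PN]; elim: N {-2}N (leqnn N) PN => [|N IH] K hK PK.
  by exists K; split => // L _; move: hK; rewrite leqn0 => /eqP ->.
case: (classic (exists L, P L /\ (L < K)%N)) => [[L [PL lt]]|nex].
  by apply: (IH L) => //; rewrite -ltnS (leq_trans lt hK).
exists K; split => // L PL; rewrite leqNgt; apply/negP => lt; apply: nex; by exists L.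
Qed.

Definition extf n (k : 'I_n -> int) (c : int) : 'I_n.+1 -> int :=
  fun i => if unlift ord0 i is Some j then k j else c.

Lemma extf0 n (k : 'I_n -> int) c : extf k c ord0 = c.
Proof. by rewrite /extf unlift_none. Qed.

Lemma extfS n (k : 'I_n -> int) c j : extf k c (lift ord0 j) = k j.
Proof. by rewrite /extf liftK. Qed.

Lemma sum_recl n (g : 'I_n.+1 -> M) (k : 'I_n.+1 -> int) :
  \sum_(i < n.+1) g i *~ k i = g ord0 *~ k ord0 + \sum_(j < n) g (lift ord0 j) *~ k (lift ord0 j).
Proof. by rewrite big_ord_recl. Qed.

Lemma ext_sum n (g : 'I_n.+1 -> M) (k : 'I_n -> int) :
  \sum_(i < n.+1) g i *~ extf k 0 i = \sum_(j < n) g (lift ord0 j) *~ k j.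
Proof.
rewrite sum_recl extf0 mulr0z add0r; apply: eq_bigr => j _; by rewrite extfS.
Qed.

Lemma subgrp_free n (g : 'I_n -> M) S : indep g -> subgrp S -> (forall x, S x -> zspan g x) ->
  exists r (h : 'I_r -> M), zbasis S h.
Proof.
elim: n g S => [|n IH] g S gind SS Sin.
  exists 0%N, (fun _ => 0); split; first by move=> k _ [].
  move=> x; split=> [Sx|[k ->]]; last by rewrite big_ord0; exact: SS.1.
  have [k ->] := Sin x Sx; exists (fun _ => 0); by rewrite !big_ord0.
pose g' := fun j : 'I_n => g (lift ord0 j).
have g'ind : indep g'.
  move=> k hk j; have := gind (extf k 0) _ (lift ord0 j); rewrite extfS; apply.
  by rewrite ext_sum.
pose S' := fun x => S x /\ zspan g' x.
have SS' : subgrp S'.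
  split; first by split; [exact: SS.1 | exact: (zspan_subgrp g').1].
  by move=> x y [? ?] [? ?]; split; [exact: SS.2 | exact: (zspan_subgrp g').2].
have [r [h' [h'ind h'E]]] := IH g' S' g'ind SS' (fun x => @proj2 _ _).
have h'S : forall j, S' (h' j) by move=> j; apply: (@zbasis_in S' r h').
pose T t := exists x k, S x /\ x = \sum_(i < n.+1) g i *~ k i /\ k ord0 = t.
have span0 : forall x k, x = \sum_(i < n.+1) g i *~ k i -> k ord0 = 0 -> zspan g' x.
  move=> x k -> k0; exists (fun j => k (lift ord0 j)); by rewrite sum_recl k0 mulr0z add0r.
case: (classic (exists t, T t /\ t != 0)) => [[t [Tt tn0]] | noT]; last first.
  exists r, h'; split => // x; rewrite -h'E; split=> [Sx|[]//]; split => //.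
  have [k xk] := Sin x Sx; apply: (span0 x k xk).
  case: (k ord0 =P 0) => // /eqP kn0; exfalso; apply: noT; exists (k ord0); split => //.
  by exists x, k.
have TB : forall t1 t2, T t1 -> T t2 -> T (t1 - t2).
  move=> t1 t2 [x1 [k1 [S1 [e1 h1]]]] [x2 [k2 [S2 [e2 h2]]]].
  exists (x1 - x2), (fun i => k1 i - k2 i); split; first exact: SS.2.
  by rewrite e1 e2 sumB h1 h2.
have TM : forall t z, T t -> T (t * z).
  move=> t0 z [x [k [Sx [e h]]]]; exists (x *~ z), (fun i => k i * z); split; first exact: subgrpMz.
  by rewrite e sumMz h.
have [d [[d0 Td] dmin]] : exists d, ((0 < d)%N /\ T d%:Z) /\
    forall K, (0 < K)%N /\ T K%:Z -> (d <= K)%N.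
  apply: min_ex; exists `|t|%N; split; first by rewrite absz_gt0.
  rewrite abszE; have [t0|t0] := leP 0 t; first by rewrite ger0_norm.
  by rewrite ltr0_norm // -mulrN1; apply: TM.
have [u [ku [Su [eu hu]]]] := Td.
have dpos : (0 < d%:Z) by rewrite ltz_nat.
have Sinv : forall x k, S x -> x = \sum_(i < n.+1) g i *~ k i -> (d%:Z %| k ord0)%Z.
  move=> x k Sx ex; apply/dvdz_mod0P.
  set k0 := k ord0; set q := (k0 %/ d%:Z)%Z; set rm := (k0 %% d%:Z)%Z.
  have e : k0 = q * d%:Z + rm := divz_eq k0 d%:Z.
  have TT : T rm.
    have -> : rm = k0 - d%:Z * q by rewrite e [d%:Z * q]mulrC addrAC subrr add0r.
    apply: TB; first by exists x, k.
    by apply: TM; exists u, ku.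
  have ge : 0 <= rm by apply: modz_ge0; rewrite gt_eqF.
  have lt : rm < d%:Z by apply: ltz_pmod.
  case: (rm =P 0) => // /eqP rn0; exfalso.
  have : (d <= `|rm|)%N by apply: dmin; split; [rewrite absz_gt0 | rewrite gez0_abs].
  by rewrite -lez_nat gez0_abs // leNgt lt.
pose h := fun i : 'I_r.+1 => if unlift ord0 i is Some j then h' j else u.
have h0 : h ord0 = u by rewrite /h unlift_none.
have hS : forall j, h (lift ord0 j) = h' j by move=> j; rewrite /h liftK.
exists r.+1, h; split.
- move=> l hl.
  move: hl; rewrite sum_recl h0.
  have -> : \sum_(j < r) h (lift ord0 j) *~ l (lift ord0 j) =
            \sum_(j < r) h' j *~ l (lift ord0 j) by apply: eq_bigr => j _; rewrite hS.
  set y := \sum_(j < r) _ => hl.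
  have [ky ey] : zspan g' y := subgrp_sum _ (zspan_subgrp g') (fun j => (h'S j).2).
  have l0 : l ord0 = 0.
    have e2 : \sum_(i < n.+1) g i *~ (ku i * l ord0 + extf ky 0 i) = \sum_(i < n.+1) g i *~ (fun _ => 0) i.
      rewrite [RHS]big1; last by move=> i _; rewrite /= mulr0z.
      under eq_bigr do rewrite mulrzDr.
      by rewrite big_split /= -sumMz -eu ext_sum -ey.
    have := comb_inj gind e2 ord0; rewrite hu extf0 addr0 => /eqP.
    by rewrite mulf_eq0 (gt_eqF dpos) /= => /eqP.
  move: hl; rewrite l0 mulr0z add0r => hl.
  have hl' := h'ind (fun j => l (lift ord0 j)) hl.
  by move=> i; case: (unliftP ord0 i) => [j ->|->].
- move=> x; split.
  + move=> Sx; have [k ek] := Sin x Sx.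
    have /dvdzP [q eq] := Sinv x k Sx ek.
    set y := x - u *~ q.
    have Sy : S y by apply: SS.2 => //; apply: subgrpMz.
    have ey : y = \sum_(i < n.+1) g i *~ (k i - ku i * q) by rewrite /y ek eu sumMz sumB.
    have Sy' : S' y by split => //; apply: (span0 y _ ey); rewrite hu eq mulrC subrr.
    have [l' el'] := (h'E y).1 Sy'.
    exists (extf l' q); rewrite sum_recl h0 extf0.
    have -> : \sum_(j < r) h (lift ord0 j) *~ extf l' q (lift ord0 j) =
              \sum_(j < r) h' j *~ l' j by apply: eq_bigr => j _; rewrite hS extfS.
    by rewrite -el' /y addrC subrK.
  + move=> [l ->]; apply: subgrp_sum => // i.
    by case: (unliftP ord0 i) => [j ->|->]; [rewrite hS; exact: (h'S j).1 | rewrite h0].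
Qed.


Lemma zbasis_subgrp S r (h : 'I_r -> M) : zbasis S h -> subgrp S.
Proof.
move=> [_ E]; have [Z0 ZB] := zspan_subgrp h; split; first exact/E.
by move=> x y /E Sx /E Sy; apply/E; apply: ZB.
Qed.

Section Rank.
Variables (n : nat) (g : 'I_n -> M).
Hypothesis gind : indep g.

Definition crow x : 'rV[rat]_n := \row_i (coef g x i)%:~R.
Definition cmat r (h : 'I_r -> M) : 'M[rat]_(r, n) := \matrix_(j, i) (coef g (h j) i)%:~R.

Lemma row_cmat r (h : 'I_r -> M) j : row j (cmat h) = crow (h j).
Proof. by apply/rowP => i; rewrite !mxE. Qed.

Lemma crow_comb r (h : 'I_r -> M) l : (forall j, zspan g (h j)) ->
  crow (\sum_(j < r) h j *~ l j) = (\row_j (l j)%:~R) *m cmat h.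
Proof.
move=> hs; apply/rowP => i; rewrite !mxE (coef_comb gind) // rmorph_sum.
by apply: eq_bigr => j _; rewrite !mxE rmorphM /= mulrC.
Qed.

Lemma crowMz x z : zspan g x -> crow (x *~ z) = z%:~R *: crow x.
Proof. by move=> hx; apply/rowP => i; rewrite !mxE (coefMz gind) // rmorphM /= mulrC. Qed.

Lemma crow_inj x y : zspan g x -> zspan g y -> crow x = crow y -> x = y.
Proof.
move=> hx hy e; rewrite (coefK hx) (coefK hy); apply: eq_bigr => i _.
by have := congr1 (fun r : 'rV[rat]_n => r 0 i) e; rewrite !mxE => /intr_inj ->.
Qed.

Lemma crow_sub S r (h : 'I_r -> M) x : zbasis S h -> (forall y, S y -> zspan g y) -> S x ->
  (crow x <= cmat h)%MS.
Proof.
move=> b Sin Sx; have [l ->] := (b.2 x).1 Sx.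
rewrite crow_comb; first exact: submxMl.
by move=> j; apply: Sin; apply: zbasis_in b.
Qed.

Lemma cmat_sub S S' r r' (h : 'I_r -> M) (h' : 'I_r' -> M) :
  zbasis S h -> zbasis S' h' -> (forall x, S x -> S' x) -> (forall y, S' y -> zspan g y) ->
  (cmat h <= cmat h')%MS.
Proof.
move=> b b' SS Sin; apply/row_subP => j; rewrite row_cmat; apply: (crow_sub b') => //.
by apply: SS; apply: zbasis_in b.
Qed.

Lemma clear_den r (v : 'rV[rat]_r) :
  exists D : int, D != 0 /\ exists w : 'I_r -> int, forall j, D%:~R * v 0 j = (w j)%:~R.
Proof.
exists (\prod_j denq (v 0 j)); split; first by apply/prodf_neq0 => j _; apply: denq_neq0.
exists (fun j => numq (v 0 j) * \prod_(j' | j' != j) denq (v 0 j')) => j.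
rewrite (bigD1 j) //= !intrM numqE; ring.
Qed.

Lemma inj_row_free (F : fieldType) r k (A : 'M[F]_(r, k)) :
  (forall v : 'rV_r, v *m A = 0 -> v = 0) -> row_free A.
Proof.
move=> H; rewrite -kermx_eq0; apply/eqP/row_matrixP => i; rewrite row0; apply: H.
by apply/eqP; rewrite -sub_kermx row_sub.
Qed.

Lemma cmat_free S r (h : 'I_r -> M) : zbasis S h -> (forall y, S y -> zspan g y) ->
  row_free (cmat h).
Proof.
move=> b Sin; apply: inj_row_free => v hv.
have [D [Dn0 [w hw]]] := clear_den v.
have hs : forall j, zspan g (h j) by move=> j; apply: Sin; apply: zbasis_in b.
set z := \sum_(j < r) h j *~ w j.
have zs : zspan g z := subgrp_sum _ (zspan_subgrp g) hs.
have cz : crow z = 0.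
  rewrite crow_comb //.
  have -> : \row_j (w j)%:~R = D%:~R *: v by apply/rowP => j; rewrite !mxE hw.
  by rewrite -scalemxAl hv scaler0.
have z0 : z = 0.
  apply: (crow_inj zs (zspan_subgrp g).1); rewrite cz; apply/rowP => i.
  have c0 := coefMz gind 0 i (zspan_subgrp g).1; rewrite mulr0z mulr0 in c0.
  by rewrite !mxE c0.
have w0 := b.1 w z0.
apply/rowP => j; rewrite mxE; apply/eqP.
have := hw j; rewrite w0 mulr0z => /eqP; rewrite mulf_eq0 intr_eq0 (negPf Dn0) /=.
by [].
Qed.

Lemma zbasis_rank S r (h : 'I_r -> M) : zbasis S h -> (forall y, S y -> zspan g y) ->
  \rank (cmat h) = r.
Proof. by move=> b Sin; apply/eqP; apply: cmat_free b Sin. Qed.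

Lemma zbasis_uniq S r1 r2 (h1 : 'I_r1 -> M) (h2 : 'I_r2 -> M) :
  zbasis S h1 -> zbasis S h2 -> (forall y, S y -> zspan g y) -> r1 = r2.
Proof.
move=> b1 b2 Sin; rewrite -(zbasis_rank b1 Sin) -(zbasis_rank b2 Sin).
apply/eqP; rewrite eqn_leq; apply/andP; split; apply: mxrankS.
  exact: (cmat_sub b1 b2).
exact: (cmat_sub b2 b1).
Qed.

Lemma rank_formula S1 S2 T S3 r1 r2 rT r3 (h1 : 'I_r1 -> M) (h2 : 'I_r2 -> M)
  (hT : 'I_rT -> M) (h3 : 'I_r3 -> M) :
  zbasis S1 h1 -> zbasis S2 h2 -> zbasis T hT -> zbasis S3 h3 ->
  (forall x, T x -> zspan g x) -> (forall x, S1 x -> T x) -> (forall x, S2 x -> T x) ->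
  (forall x, S3 x <-> S1 x /\ S2 x) ->
  (forall x, T x -> exists d, (0 < d)%N /\ exists x1 x2, S1 x1 /\ S2 x2 /\ x *+ d = x1 + x2) ->
  (r1 + r2 = rT + r3)%N.
Proof.
move=> b1 b2 bT b3 Tin S1T S2T S3E FI.
have S1in x : S1 x -> zspan g x by move=> h; apply: Tin; apply: S1T.
have S2in x : S2 x -> zspan g x by move=> h; apply: Tin; apply: S2T.
have S3in x : S3 x -> zspan g x by move=> h; apply: S1in; exact: ((S3E x).1 h).1.
rewrite -(zbasis_rank b1 S1in) -(zbasis_rank b2 S2in) -(zbasis_rank bT Tin).
rewrite -(zbasis_rank b3 S3in) -mxrank_sum_cap.
congr (_ + _)%N; apply/eqP; rewrite eqn_leq; apply/andP; split; apply: mxrankS.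
- by rewrite addsmx_sub (cmat_sub b1 bT) // (cmat_sub b2 bT).
- apply/row_subP => j; rewrite row_cmat.
  have [d [d0 [x1 [x2 [Sx1 [Sx2 e]]]]]] := FI _ (zbasis_in j bT).
  have hTs := Tin _ (zbasis_in j bT).
  have -> : crow (hT j) = (d%:R)^-1 *: (crow x1 + crow x2).
    apply/rowP => i; rewrite !mxE -intrD -(coefD gind _ (S1in _ Sx1) (S2in _ Sx2)) -e (coefMn gind) //.
    rewrite rmorphMn /= mulrC -[_ *+ d]mulr_natr mulfK //.
    by rewrite pnatr_eq0 -lt0n.
  apply: scalemx_sub; apply: addmx_sub_adds; [exact: (crow_sub b1 S1in Sx1) | exact: (crow_sub b2 S2in Sx2)].
- apply/row_subP => j; set v := row j _.
  have v1 : (v <= cmat h1)%MS := submx_trans (row_sub j _) (capmxSl _ _).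
  have v2 : (v <= cmat h2)%MS := submx_trans (row_sub j _) (capmxSr _ _).
  move/submxP: v1 => [a ea]; move/submxP: v2 => [b eb].
  have [Da [Dan0 [wa hwa]]] := clear_den a.
  have [Db [Dbn0 [wb hwb]]] := clear_den b.
  have hs1 : forall k, zspan g (h1 k) by move=> k; apply: S1in; apply: zbasis_in b1.
  have hs2 : forall k, zspan g (h2 k) by move=> k; apply: S2in; apply: zbasis_in b2.
  set x1 := \sum_(k < r1) h1 k *~ wa k.
  set x2 := \sum_(k < r2) h2 k *~ wb k.
  have Sx1 : S1 x1 by apply/b1.2; exists wa.
  have Sx2 : S2 x2 by apply/b2.2; exists wb.
  have c1 : crow x1 = Da%:~R *: v.
    rewrite crow_comb // ea scalemxAl; congr (_ *m _); apply/rowP => k; by rewrite !mxE hwa.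
  have c2 : crow x2 = Db%:~R *: v.
    rewrite crow_comb // eb scalemxAl; congr (_ *m _); apply/rowP => k; by rewrite !mxE hwb.
  have e : x1 *~ Db = x2 *~ Da.
    have z1 := S1in _ Sx1; have z2 := S2in _ Sx2.
    apply: crow_inj; [exact: (subgrpMz _ (zspan_subgrp g) z1) | exact: (subgrpMz _ (zspan_subgrp g) z2) |].
    by rewrite (@crowMz x1 Db z1) (@crowMz x2 Da z2) c1 c2 !scalerA mulrC.
  have S3y : S3 (x1 *~ Db).
    apply/S3E; split; first exact: subgrpMz (zbasis_subgrp b1) Sx1.
    by rewrite e; exact: subgrpMz (zbasis_subgrp b2) Sx2.
  have := crow_sub b3 S3in S3y; rewrite (@crowMz x1 Db (S1in _ Sx1)) c1 scalerA.
  move=> H; have -> : v = ((Db%:~R * Da%:~R)^-1 : rat) *: ((Db%:~R * Da%:~R) *: v).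
    by rewrite scalerA mulVf ?scale1r // mulf_neq0 // intr_eq0.
  exact: scalemx_sub H.
- rewrite sub_capmx; apply/andP; split; [apply: (cmat_sub b3 b1) | apply: (cmat_sub b3 b2)] => // x /S3E [] //.
Qed.

End Rank.
End Lattice.

Section Geom.
Variables (R : realType) (m : nat) (I : Type) (hyp : I -> 'rV[R]_m * R).
Local Notation V := 'rV[R]_m.

Lemma dotvD (x y a : V) : dotv (x + y) a = dotv x a + dotv y a.
Proof. by rewrite /dotv -big_split; apply: eq_bigr => j _; rewrite mxE mulrDl. Qed.
Lemma dotvN (x a : V) : dotv (- x) a = - dotv x a.
Proof. by rewrite /dotv -sumrN; apply: eq_bigr => j _; rewrite mxE mulNr. Qed.
Lemma dotvB (x y a : V) : dotv (x - y) a = dotv x a - dotv y a.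
Proof. by rewrite dotvD dotvN. Qed.
Lemma dotv0 (a : V) : dotv 0 a = 0.
Proof. by rewrite /dotv big1 // => j _; rewrite mxE mul0r. Qed.
Lemma dotvMn (x a : V) N : dotv (x *+ N) a = dotv x a *+ N.
Proof. elim: N => [|N IH]; first by rewrite !mulr0n dotv0. by rewrite !mulrS dotvD IH. Qed.

Variables (w : 'I_m -> I) (p : V).
Hypothesis hp : meet_in_point hyp w p.

Definition Ma : 'M[R]_m := \matrix_(i, k) (hyp (w k)).1 0 i.

Lemma dotvE x k : dotv x (hyp (w k)).1 = (x *m Ma) 0 k.
Proof. by rewrite /dotv !mxE; apply: eq_bigr => j _; rewrite mxE. Qed.

Lemma p_in k : dotv p (hyp (w k)).1 = (hyp (w k)).2.
Proof. exact: ((hp p).2 erefl k (in_setT k)). Qed.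

Lemma ker0 x : (forall k, dotv x (hyp (w k)).1 = 0) -> x = 0.
Proof.
move=> H; have : W_A hyp w setT (p + x).
  by move=> k _; rewrite /hyperplane dotvD p_in H addr0.
by move/hp => e; apply: (addrI p); rewrite addr0.
Qed.

Lemma Ma_unit : Ma \in unitmx.
Proof.
rewrite -row_free_unit; apply: inj_row_free => v hv; apply: ker0 => k.
by rewrite dotvE hv mxE.
Qed.

Lemma stabE (Gamma : V -> Prop) A x :
  stabA hyp Gamma w A x <-> Gamma x /\ forall k, k \in A -> dotv x (hyp (w k)).1 = 0.
Proof.
split.
- move=> [Gx hs]; split => // k kA.
  have : W_A hyp w A (p + x).
    by apply/hs; rewrite /translate addrK => k' _; exact: p_in.
  move/(_ k kA); rewrite /hyperplane dotvD p_in => e.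
  by apply: (addrI (hyp (w k)).2); rewrite addr0.
- move=> [Gx hx]; split => // y; rewrite /translate; split => H k kA; have := H k kA;
    rewrite /hyperplane dotvB hx // subr0 //.
Qed.

Lemma Pset_lem (Gamma : V -> Prop)
  (Hinv : forall i g, Gamma g -> exists j,
      same_set (hyperplane (hyp j)) (translate (hyperplane (hyp i)) g))
  (B : {set 'I_m}) gam v :
  Gamma gam -> (forall k, dotv v (hyp (w k)).1 = if k \in B then dotv gam (hyp (w k)).1 else 0) ->
  Pset hyp (p + v).
Proof.
move=> Gg hv.
pose J k := proj1_sig (constructive_indefinite_description _ (Hinv (w k) gam Gg)).
have HJ k : same_set (hyperplane (hyp (J k))) (translate (hyperplane (hyp (w k))) gam).
  exact: (proj2_sig (constructive_indefinite_description _ (Hinv (w k) gam Gg))).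
exists (fun k => if k \in B then J k else w k) => x; split.
- move=> Hx; have : x - (p + v) = 0.
    apply: ker0 => k; have := Hx k (in_setT k); case: ifP => kB.
    + move/(HJ k); rewrite /translate /hyperplane dotvB => e.
      rewrite dotvB dotvD hv kB p_in -e; ring.
    + rewrite /hyperplane => e; rewrite dotvB dotvD hv kB p_in e; ring.
  by move/eqP; rewrite subr_eq0 => /eqP.
- move=> -> k _; case: ifP => kB.
  + by apply/(HJ k); rewrite /translate /hyperplane dotvB dotvD hv kB p_in; ring.
  + by rewrite /hyperplane dotvD hv kB p_in addr0.
Qed.

Lemma FI_lem (Gamma : V -> Prop)
  (Hinv : forall i g, Gamma g -> exists j,
      same_set (hyperplane (hyp j)) (translate (hyperplane (hyp i)) g))
  (Gsub : subgrp Gamma)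
  (finP : exists s : seq V, forall q, Pset hyp q ->
      exists2 q0, q0 \in s & exists g, Gamma g /\ q = q0 + g)
  (B : {set 'I_m}) gam :
  Gamma gam -> exists d, (0 < d)%N /\ exists x1, Gamma x1 /\
    forall k, dotv x1 (hyp (w k)).1 = if k \in B then dotv gam (hyp (w k)).1 *+ d else 0.
Proof.
move=> Gg; have [s Hs] := finP.
pose b := \row_k (if k \in B then dotv gam (hyp (w k)).1 else 0).
pose l := b *m invmx Ma.
have hl k : dotv l (hyp (w k)).1 = if k \in B then dotv gam (hyp (w k)).1 else 0.
  by rewrite dotvE mulmxKV ?Ma_unit // mxE.
have PN (N : 'I_(size s).+1) : exists i : 'I_(size s), exists g, Gamma g /\ p + l *+ N = nth 0 s i + g.
  have hv : forall k, dotv (l *+ N) (hyp (w k)).1 =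
      if k \in B then dotv (gam *+ N) (hyp (w k)).1 else 0.
    by move=> k; rewrite !dotvMn hl; case: ifP => _ //; rewrite mul0rn.
  have [q0 qs [g [Gg' e]]] := Hs _ (Pset_lem Hinv (subgrpMn _ Gsub Gg) hv).
  have qi : (index q0 s < size s)%N by rewrite index_mem.
  by exists (Ordinal qi), g; rewrite /= nth_index.
pose f N := proj1_sig (constructive_indefinite_description _ (PN N)).
have Hf (N : 'I_(size s).+1) : exists g, Gamma g /\ p + l *+ N = nth 0 s (f N) + g.
  exact: (proj2_sig (constructive_indefinite_description _ (PN N))).
have claim : forall N1 N2 : 'I_(size s).+1, (N1 < N2)%N -> f N1 = f N2 ->
    exists d, (0 < d)%N /\ exists x1, Gamma x1 /\
    forall k, dotv x1 (hyp (w k)).1 = if k \in B then dotv gam (hyp (w k)).1 *+ d else 0.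
  move=> N1 N2 lt fe.
  have [g1 [G1 e1]] := Hf N1; have [g2 [G2 e2]] := Hf N2.
  exists (N2 - N1)%N; split; first by rewrite subn_gt0.
  exists (l *+ (N2 - N1)); split.
    have -> : l *+ (N2 - N1) = g2 - g1.
      have E : l *+ N2 = l *+ N1 + l *+ (N2 - N1) by rewrite -mulrnDr subnKC // ltnW.
      have : l *+ N2 - l *+ N1 = g2 - g1.
        transitivity ((p + l *+ N2) - (p + l *+ N1)); first by rewrite opprD addrACA subrr add0r.
        by rewrite e1 e2 fe opprD addrACA subrr add0r.
      by rewrite E addrAC subrr add0r.
    exact: Gsub.2.
  by move=> k; rewrite dotvMn hl; case: ifP => _ //; rewrite mul0rn.
have : ~~ injectiveb f.
  apply/injectiveP => inj; have := @leq_card _ _ f inj; by rewrite !card_ord ltnn.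
move/injectivePn => [N1 [N2 ne fe]].
case: (ltngtP N1 N2) => [lt|lt|eq].
- exact: claim lt fe.
- exact: claim lt (esym fe).
- by move: ne; rewrite (val_inj eq) eqxx.
Qed.

End Geom.

Section Zrank.
Variables (R : realType) (m n : nat) (g : 'I_n -> 'rV[R]_m).
Hypothesis gind : indep g.

Lemma zrank_eq S r (h : 'I_r -> 'rV[R]_m) : zbasis S h -> (forall y, S y -> zspan g y) ->
  zrank S = r.
Proof.
move=> b Sin; rewrite /zrank; set e := epsilon _ _.
have : has_zrank S e by rewrite /e; apply: epsilon_spec; exists r, h.
case => h' b'; exact: (zbasis_uniq gind b' b Sin).
Qed.
End Zrank.

Unset Implicit Arguments.
Theorem mainTheorem8 (R : realType) (m : nat)
  (Gamma : 'rV[R]_m -> Prop) (I : countType) (hyp : I -> 'rV[R]_m * R) :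
  (* Gamma: finitely generated free abelian dense subgroup of V *)
  (exists n, has_zrank Gamma n) ->
  dense_in_V Gamma ->
  (* C = {hyperplane (hyp i)} : affine hyperplanes (nonzero normals) *)
  (forall i, (hyp i).1 != 0) ->
  (* C is Gamma-invariant *)
  (forall i g, Gamma g -> exists j,
      same_set (hyperplane (hyp j)) (translate (hyperplane (hyp i)) g)) ->
  (* C has finitely many Gamma-orbits *)
  (exists s : seq I, forall i, exists2 j, j \in s & exists g, Gamma g /\
      same_set (hyperplane (hyp i)) (translate (hyperplane (hyp j)) g)) ->
  (* the normals of elements of C span V *)
  (forall v : 'rV[R]_m, exists s : seq (I * R),
      v = \sum_(q <- s) q.2 *: (hyp q.1).1) ->
  (* P consists of finitely many Gamma-orbits *)
  (exists s : seq 'rV[R]_m, forall p, Pset hyp p ->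
      exists2 q, q \in s & exists g, Gamma g /\ p = q + g) ->
  forall (w : 'I_m -> I), (exists p, meet_in_point hyp w p) ->
  forall A1 A2 : {set 'I_m},
    (A1 :&: A2 = set0 ->
      (zrank (stabA hyp Gamma w A1) + zrank (stabA hyp Gamma w A2)
       = zrank Gamma + zrank (stabA hyp Gamma w (A1 :|: A2)))%N)
    /\
    (A1 :|: A2 = setT ->
      (zrank (stabA hyp Gamma w A1) + zrank (stabA hyp Gamma w A2)
       = zrank (stabA hyp Gamma w (A1 :&: A2)))%N).
Proof.
move=> [n [g [gind gE]]] _ _ Hinv _ _ finP w [p hp] A1 A2.
have gb : zbasis Gamma g := conj gind gE.
have Gsub := zbasis_subgrp gb.
have Gin : forall x, Gamma x -> zspan g x := fun x => (gE x).1.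
pose S A := stabA hyp Gamma w A.
have SE A x : S A x <-> Gamma x /\ forall k, k \in A -> dotv x (hyp (w k)).1 = 0.
  exact: (stabE hp Gamma A x).
have Ssub A : subgrp (S A).
  split; first by apply/SE; split; [exact: Gsub.1 | move=> k _; exact: dotv0].
  move=> x y /SE [Gx hx] /SE [Gy hy]; apply/SE; split; first exact: Gsub.2.
  by move=> k kA; rewrite dotvB hx // hy // subrr.
have SG A x : S A x -> Gamma x by move/SE => [].
have Sin A x : S A x -> zspan g x by move=> /SG; exact: Gin.
have Sb A : exists r (h : 'I_r -> 'rV[R]_m), zbasis (S A) h.
  exact: (subgrp_free gind (Ssub A) (Sin A)).
have [r1 [h1 b1]] := Sb A1; have [r2 [h2 b2]] := Sb A2; have [r3 [h3 b3]] := Sb (A1 :|: A2).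
rewrite (zrank_eq gind b1 (Sin A1)) (zrank_eq gind b2 (Sin A2)) (zrank_eq gind b3 (Sin _)).
have capE x : S (A1 :|: A2) x <-> S A1 x /\ S A2 x.
  rewrite !SE; split.
  - move=> [Gx hx]; split; split => // k kA; apply: hx; by rewrite in_setU kA ?orbT.
  - move=> [[Gx h1'] [_ h2']]; split => // k; rewrite in_setU => /orP [] kA;
      [exact: h1' | exact: h2'].
have FI := FI_lem hp Hinv Gsub finP.
split.
- move=> disj; rewrite (zrank_eq gind gb Gin).
  apply: (rank_formula gind b1 b2 gb b3 Gin (SG A1) (SG A2) capE).
  move=> x Gx; have [d [d0 [x1 [Gx1 hx1]]]] := FI A2 x Gx.
  exists d; split => //; exists x1, (x *+ d - x1); split; [|split].
  + apply/SE; split => // k kA; rewrite hx1.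
    have : k \notin A2.
      apply/negP => kA2; have : k \in A1 :&: A2 by rewrite inE kA kA2.
      by rewrite disj inE.
    by move/negPf => ->.
  + apply/SE; split; first by apply: Gsub.2 => //; exact: subgrpMn.
    by move=> k kA; rewrite dotvB dotvMn hx1 kA subrr.
  + by rewrite addrC subrK.
- move=> cov.
  have [rT [hT bT]] := Sb (A1 :&: A2).
  rewrite (zrank_eq gind bT (Sin _)).
  have r30 : r3 = 0%N.
    have b0 : zbasis (S (A1 :|: A2)) (fun i : 'I_0 => (0 : 'rV[R]_m)).
      split; first by move=> k _ [].
      move=> x; rewrite SE cov; split.
      * move=> [Gx hx]; exists (fun _ => 0); rewrite big_ord0; apply: (ker0 hp) => k.
        exact: hx (in_setT k).
      * move=> [k ->]; rewrite big_ord0; split; [exact: Gsub.1 | move=> k' _; exact: dotv0].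
    exact: (zbasis_uniq gind b3 b0 (Sin _)).
  have S1T x : S A1 x -> S (A1 :&: A2) x.
    move=> /SE [Gx hx]; apply/SE; split => // k; rewrite inE => /andP [kA _]; exact: hx.
  have S2T x : S A2 x -> S (A1 :&: A2) x.
    move=> /SE [Gx hx]; apply/SE; split => // k; rewrite inE => /andP [_ kA]; exact: hx.
  have := rank_formula gind b1 b2 bT b3 (Sin _) S1T S2T capE; rewrite r30 addn0; apply.
  move=> x /SE [Gx hx]; have [d [d0 [x1 [Gx1 hx1]]]] := FI (~: A1) x Gx.
  exists d; split => //; exists x1, (x *+ d - x1); split; [|split].
  + apply/SE; split => // k kA; by rewrite hx1 in_setC kA.
  + apply/SE; split; first by apply: Gsub.2 => //; exact: subgrpMn.
    move=> k kA; rewrite dotvB dotvMn hx1; case: ifP => kB; first by rewrite subrr.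
    have kA1 : k \in A1 by move: kB; rewrite in_setC => /negbFE.
    by rewrite hx ?mul0rn ?subr0 // inE kA1 kA.
  + by rewrite addrC subrK.
Qed.
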